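(* Let $p_1,p_2\in(0,1)$ and let $\{X^1_k\}_{k\ge1}$, $\{X^2_k\}_{k\ge1}$ be two independent sequences of i.i.d. Bernoulli random variables with success parameters $p_1$ and $p_2$ respectively. Set $S^j(n)=\sum_{i=1}^n X^j_i$ for $j=1,2$ and $J^2=\inf\{n\ge1: S^1(n)=S^2(n)\}$ (with $\inf\emptyset=\infty$). Then $P(J^2=\infty)=|p_1-p_2|$, and for all $p_1,p_2\in(0,1)$ we have $E(J^2)=\infty$.
   Context: All random variables $X^j_k$ ($j=1,2$, $k\ge1$) are mutually independent, and $P(X^j_k=1)=p_j=1-P(X^j_k=0)$. *)

(* Defs.v *)
From HB Require Import structures.
From mathcomp Require Import all_boot all_order all_algebra.
From mathcomp Require Import all_classical all_reals all_analysis.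
Set Implicit Arguments. Unset Strict Implicit. Unset Printing Implicit Defensive.
Import Order.TTheory GRing.Theory Num.Theory.
Local Open Scope classical_set_scope.
Local Open Scope ring_scope.

Definition mutually_independent {d} {T : measurableType d} {R : realType}
  (P : probability T R) {I : eqType} (D : set I) (X : I -> T -> R) : Prop :=
  forall (F : seq I) (B : I -> set R),
    uniq F -> (forall i, i \in F -> D i) -> (forall i, measurable (B i)) ->
    P (\bigcap_(i in [set i | i \in F]) (X i @^-1` B i)) =
    (\prod_(i <- F) P (X i @^-1` B i))%E.

Definition Ssum {T : Type} {R : realType} (X : nat -> nat -> T -> R)
  (j n : nat) (x : T) : R := \sum_(1 <= i < n.+1) X j i x.

Definition J2 {T : Type} {R : realType} (X : nat -> nat -> T -> R) (x : T)
  : \bar R :=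
  ereal_inf [set (n%:R)%:E | n in [set n : nat | (0 < n)%N /\
                                     Ssum X 1 n x = Ssum X 2 n x]].

(* Main.v *)
Require Import Defs.
From HB Require Import structures.
From mathcomp Require Import all_boot all_order all_algebra.
From mathcomp Require Import all_classical all_reals all_analysis.
From mathcomp Require Import measurable_realfun.
From mathcomp Require Import ring lra zify.
Import Order.TTheory GRing.Theory Num.Theory.
Import numFieldTopology.Exports numFieldNormedType.Exports.
Local Open Scope classical_set_scope.
Local Open Scope ring_scope.

Section Comb.
Variable R : realType.
Variables p1 p2 : R.

Definition st (s : bool * bool) : int :=
  match s with (true, false) => 1 | (false, true) => -1 | _ => 0 end.
Fixpoint Dz (w : seq (bool * bool)) : int :=
  if w is s :: w' then st s + Dz w' else 0.
Fixpoint avoid (w : seq (bool * bool)) : bool :=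
  if w is s :: w' then (Dz w != 0) && avoid w' else true.
Definition steps := [:: (true,true); (true,false); (false,true); (false,false)].
Fixpoint pats n : seq (seq (bool * bool)) :=
  if n is n'.+1 then [seq s :: w | w <- pats n', s <- steps] else [:: [::]].
Definition wt (s : bool * bool) : R :=
  (if s.1 then p1 else 1 - p1) * (if s.2 then p2 else 1 - p2).
Fixpoint W w : R := if w is s :: w' then wt s * W w' else 1.
Definition E n (h : int -> R) := \sum_(w <- pats n) h (Dz w) * W w.
Definition A n (h : int -> R) := \sum_(w <- pats n) (avoid w)%:R * h (Dz w) * W w.
Definition Tm (h : int -> R) x := \sum_(s <- steps) wt s * h (x + st s).
Definition Tp (h : int -> R) x := \sum_(s <- steps) wt s * (st s)%:~R * h (x + st s).

Lemma pats_S n : pats n.+1 = [seq s :: w | w <- pats n, s <- steps].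
Proof. by []. Qed.

Lemma E_S n h : E n.+1 h = E n (Tm h).
Proof.
rewrite /E pats_S big_allpairs_dep; apply: eq_bigr => w _.
rewrite /Tm big_distrl; apply: eq_bigr => s _ /=.
by rewrite [st s + _]addrC mulrA [h _ * _]mulrC.
Qed.

Lemma A_S n h : A n.+1 h = A n (Tm (fun y => (y != 0)%:R * h y)).
Proof.
rewrite /A pats_S big_allpairs_dep; apply: eq_bigr => w _.
rewrite /Tm big_distrr big_distrl; apply: eq_bigr => s _ /=.
rewrite [st s + _]addrC; case: (avoid w); case: (Dz w + st s != 0) => /=; ring.
Qed.

Lemma E0 h : E 0 h = h 0.
Proof. by rewrite /E /= big_seq1 mulr1. Qed.
Lemma A0 h : A 0 h = h 0.
Proof. by rewrite /A /= big_seq1 mulr1 mul1r. Qed.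

Lemma E_ext n f g : (forall x, f x = g x) -> E n f = E n g.
Proof. by move=> fg; apply: eq_bigr => w _; rewrite fg. Qed.
Lemma A_ext n f g : (forall x, f x = g x) -> A n f = A n g.
Proof. by move=> fg; apply: eq_bigr => w _; rewrite fg. Qed.
Arguments E_ext n {f g}.
Arguments A_ext n {f g}.
Lemma E_add n f g : E n (fun x => f x + g x) = E n f + E n g.
Proof. by rewrite /E -big_split; apply: eq_bigr => w _; rewrite mulrDl. Qed.
Lemma E_scale n c f : E n (fun x => c * f x) = c * E n f.
Proof. by rewrite /E big_distrr; apply: eq_bigr => w _; rewrite /= mulrA. Qed.

Lemma Tm_x h x : Tm (fun y => y%:~R * h y) x = x%:~R * Tm h x + Tp h x.
Proof.
rewrite /Tm /Tp !big_cons !big_nil /= !intrD; ring.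
Qed.

Lemma TpTm h x : Tp (Tm h) x = Tm (Tp h) x.
Proof.
rewrite /Tm /Tp.
under eq_bigr do rewrite big_distrr.
under [RHS]eq_bigr do rewrite big_distrr.
rewrite [RHS]exchange_big; apply: eq_bigr => s _; apply: eq_bigr => t _ /=.
rewrite [x + st t + st s]addrAC; ring.
Qed.

Lemma claim1 n h : E n.+1 (fun x => x%:~R * h x) = n.+1%:R * E n (Tp h).
Proof.
elim: n h => [|n IH] h.
  by rewrite E_S !E0 Tm_x mul0r add0r mul1r.
rewrite E_S (E_ext n.+1 (Tm_x h)) E_add IH (E_ext n (TpTm h)) -E_S.
by rewrite -[n.+2]addn1 natrD mulrDl mul1r.
Qed.

Lemma sgn_aux (x c : int) (h : int -> R) : (c = 0 \/ c = 1 \/ c = -1) ->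
  `|x|%:~R * ((x + c != 0)%:R * h (x + c)) =
  x%:~R * ((sgz (x + c))%:~R * h (x + c)).
Proof.
move=> hc.
have [H|[[H1 H2]|[H1 H2]]] : x + c = 0 \/ (0 < x + c /\ 0 <= x) \/ (x + c < 0 /\ x <= 0) by lia.
- by rewrite H eqxx sgz0 /= !mul0r !mulr0.
- by rewrite (gt_eqF H1) gtr0_sgz // ger0_norm //= mul1r.
- rewrite (lt_eqF H1) ltr0_sgz // ler0_norm //= mul1r !intrN; ring.
Qed.

Lemma abs_sgz (x : int) : `|x|%:~R = x%:~R * (sgz x)%:~R :> R.
Proof.
have [H|[H|H]] : x = 0 \/ 0 < x \/ x < 0 by lia.
- by rewrite H normr0 mul0r.
- by rewrite gtr0_sgz // gtr0_norm // mulr1.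
- by rewrite ltr0_sgz // ltr0_norm // !intrN mulrN1.
Qed.

Lemma Tm_sgn h x : `|x|%:~R * Tm (fun y => (y != 0)%:R * h y) x =
  x%:~R * Tm (fun y => (sgz y)%:~R * h y) x.
Proof.
rewrite /Tm !big_distrr; apply: eq_bigr => s _ /=.
rewrite mulrCA [RHS]mulrCA sgn_aux //; case: s => [[] []]; auto.
Qed.

Lemma ballot n h : A n.+1 h * n.+1%:R = E n.+1 (fun x => `|x|%:~R * h x).
Proof.
elim: n h => [|n IH] h.
  rewrite A_S A0 E_S E0 mulr1 /Tm !big_cons !big_nil /= !add0r.
  by rewrite normr0 normr1 normrN1.
rewrite A_S.
have := IH (Tm (fun y => (y != 0)%:R * h y)).
rewrite (E_ext n.+1 (Tm_sgn h)) claim1 (E_ext n (TpTm _)) -E_S mulrC.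
move/(mulfI _) => ->; last by rewrite pnatr_eq0.
rewrite (@E_ext n.+2 _ (fun x => x%:~R * ((sgz x)%:~R * h x))); last first.
  by move=> x; rewrite abs_sgz mulrA.
by rewrite claim1 mulrC.
Qed.

Hypothesis p1_01 : 0 <= p1 <= 1.
Hypothesis p2_01 : 0 <= p2 <= 1.

Lemma wt_ge0 s : 0 <= wt s.
Proof.
case/andP: p1_01 => ? ?; case/andP: p2_01 => ? ?.
by rewrite /wt; case: s => [[] []] /=; apply: mulr_ge0; lra.
Qed.

Lemma W_ge0 w : 0 <= W w.
Proof. by elim: w => [|s w IH] //=; rewrite mulr_ge0 // wt_ge0. Qed.

Lemma pats_size n w : w \in pats n -> size w = n.
Proof.
elim: n w => [|n IH] w; first by rewrite inE => /eqP ->.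
by rewrite pats_S => /allpairsPdep [v [s [/IH hv _ ->]]] /=; rewrite hv.
Qed.

Arguments pats_size {n w}.

Lemma Dz_size w : `|Dz w| <= (size w)%:Z.
Proof.
elim: w => [|s w IH] //=; rewrite (le_trans (ler_normD _ _)) //.
have : `|st s| <= 1 by case: s => [[] []].
move: IH; rewrite -[(size w).+1]addn1 PoszD; lia.
Qed.

Lemma E_supp n f g : (forall x, `|x| <= n%:Z -> f x <= g x) -> E n f <= E n g.
Proof.
move=> fg; rewrite /E big_seq [leRHS]big_seq; apply: ler_sum => w hw.
rewrite ler_wpM2r ?W_ge0 // fg // -(pats_size hw); exact: Dz_size.
Qed.

Lemma E_abs n f : `|E n f| <= E n (fun x => `|f x|).
Proof.
rewrite /E (le_trans (ler_norm_sum _ _ _)) //; apply: ler_sum => w _.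
by rewrite normrM (ger0_norm (W_ge0 w)).
Qed.

Lemma E1 n : E n (fun _ => 1) = 1.
Proof.
elim: n => [|n IH]; first by rewrite E0.
rewrite E_S -IH; apply: E_ext => x; rewrite IH /Tm !big_cons big_nil /wt /=; ring.
Qed.

Lemma Ex n : E n (fun x => x%:~R) = n%:R * (p1 - p2).
Proof.
elim: n => [|n IH]; first by rewrite E0 mul0r.
rewrite E_S (@E_ext n _ (fun x => x%:~R + (p1 - p2) * 1)); last first.
  by move=> x; rewrite /Tm !big_cons big_nil /wt /= !intrD /=; ring.
by rewrite E_add E_scale E1 IH -[n.+1]addn1 natrD; ring.
Qed.

Definition m2 := p1 * (1 - p2) + (1 - p1) * p2.

Lemma Ex2 n : E n (fun x => x%:~R ^+ 2) =
  n%:R * m2 + (n%:R ^+ 2 - n%:R) * (p1 - p2) ^+ 2.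
Proof.
elim: n => [|n IH]; first by rewrite E0 mul0r expr0n /= subr0 mul0r addr0.
rewrite E_S (@E_ext n _ (fun x => x%:~R ^+ 2 + ((2 * (p1 - p2)) * x%:~R + m2 * 1))); last first.
  by move=> x; rewrite /Tm !big_cons big_nil /wt /m2 /= !intrD /=; ring.
rewrite E_add E_add !E_scale E1 IH Ex -[n.+1]addn1 natrD; ring.
Qed.

Definition f n := A n (fun _ => 1).
Definition sig2 := m2 - (p1 - p2) ^+ 2.

Lemma f_eq n : f n.+1 * n.+1%:R = E n.+1 (fun x => `|x|%:~R).
Proof. by rewrite /f ballot; apply: E_ext => x; rewrite mulr1. Qed.

Lemma f_lb n : `|p1 - p2| <= f n.+1.
Proof.
have N0 : 0 < n.+1%:R :> R by rewrite ltr0n.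
rewrite -(ler_pM2r N0) f_eq mulrC.
have := E_abs n.+1 (fun x => x%:~R); rewrite Ex normrM ger0_norm ?ler0n //.
move/le_trans; apply; apply: E_supp => x _; by rewrite intr_norm.
Qed.

Lemma f_lb2 n : sig2 / n.+1%:R <= f n.+1.
Proof.
have N0 : 0 < n.+1%:R :> R by rewrite ltr0n.
rewrite ler_pdivrMr // -(ler_pM2r N0) f_eq.
have : E n.+1 (fun x => x%:~R ^+ 2) <= E n.+1 (fun x => n.+1%:R * `|x|%:~R).
  apply: E_supp => x hx.
  have -> : x%:~R ^+ 2 = `|x|%:~R ^+ 2 :> R by rewrite intr_norm real_normK ?num_real.
  rewrite expr2 ler_wpM2r // ?intr_norm ?normr_ge0 // -intr_norm.
  by rewrite -[n.+1%:R]/((n.+1%:Z)%:~R : R) ler_int.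
rewrite E_scale Ex2 /sig2; set N := n.+1%:R; set Ea := E _ _.
have : 0 <= (N * (p1 - p2)) ^+ 2 by rewrite sqr_ge0.
nra.
Qed.

Lemma f_ub n t : 0 < t ->
  f n.+1 * n.+1%:R <= (n.+1%:R * sig2 / t + t) / 2 + n.+1%:R * `|p1 - p2|.
Proof.
move=> t0; rewrite f_eq; set N := n.+1%:R; set mu := p1 - p2.
have key (z : R) : `|z| <= (z ^+ 2 / t + t) / 2.
  rewrite ler_pdivlMr // -subr_ge0.
  have -> : z ^+ 2 / t + t - `|z| * 2 = (`|z| - t) ^+ 2 / t.
    by rewrite -(real_normK (num_real z)); field; rewrite gt_eqF.
  by rewrite divr_ge0 ?sqr_ge0 ?ltW.
apply: (@le_trans _ _ (E n.+1 (fun x => ((1 / t / 2) * x%:~R ^+ 2 +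
   ((- (2 * N * mu) / t / 2) * x%:~R + ((N * mu) ^+ 2 / t / 2 + t / 2 + N * `|mu|) * 1))))).
  apply: E_supp => x _.
  have := key (x%:~R - N * mu); have := ler_normD (x%:~R - N * mu) (N * mu).
  rewrite subrK normrM (ger0_norm (ler0n _ _)) -intr_norm => h1 h2.
  apply: (le_trans h1); apply: le_trans (lerD h2 (lexx _)) _.
  rewrite le_eqVlt; apply/orP; left; apply/eqP; field; lra.
rewrite !E_add !E_scale E1 Ex Ex2 /sig2 -/mu /N.
rewrite le_eqVlt; apply/orP; left; apply/eqP; field; lra.
Qed.

Lemma sig2_ge0 : 0 <= sig2.
Proof.
case/andP: p1_01 => ? ?; case/andP: p2_01 => ? ?.
rewrite /sig2 /m2; nra.
Qed.

Lemma f_ge0 n : 0 <= f n.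
Proof.
case: n => [|n]; first by rewrite /f A0.
exact: le_trans (normr_ge0 _) (f_lb n).
Qed.

Lemma f_cvg : (fun n => f n) @ \oo --> (`|p1 - p2| : R).
Proof.
apply/cvgrPdist_le => e e0.
near=> n.
have hn : (1 <= n)%N by near: n; exact: nbhs_infty_ge.
have hr : sig2 / e ^+ 2 <= n%:R by near: n; exact: nbhs_infty_ger.
have [m nE] : exists m, n = m.+1 by exists n.-1; rewrite prednK.
rewrite nE in hr *.
have N0 : 0 < m.+1%:R :> R by rewrite ltr0n.
have tpos : 0 < e * m.+1%:R by rewrite mulr_gt0.
have ub := @f_ub m _ tpos; have lb := f_lb m.
rewrite ler0_norm ?subr_le0 // opprB lerBlDl.
rewrite -(ler_pM2r N0); apply: (le_trans ub).
have h2 : sig2 <= e ^+ 2 * m.+1%:R by rewrite -ler_pdivrMl ?exprn_gt0 // mulrC.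
rewrite -subr_ge0.
have -> : (`|p1 - p2| + e) * m.+1%:R -
    ((m.+1%:R * sig2 / (e * m.+1%:R) + e * m.+1%:R) / 2 + m.+1%:R * `|p1 - p2|)
    = (e ^+ 2 * m.+1%:R - sig2) / (2 * e).
  by field; rewrite !gt_eqF.
by rewrite divr_ge0 ?subr_ge0 // mulr_ge0 // ltW.
Unshelve. all: by end_near.
Qed.

Lemma f_sum_big (M : R) : 0 < sig2 -> exists N, M <= \sum_(0 <= n < N) f n.
Proof.
move=> s0.
have [N hN] : exists N, M / sig2 < series (@harmonic R) N.
  apply: contrapT => /forallNP H; apply: dvg_harmonic.
  apply: nondecreasing_is_cvgn.
    by apply: nondecreasing_series => k _ _; exact: harmonic_ge0.
  exists (M / sig2) => _ [k _ <-]; by rewrite leNgt; apply/negP; apply: H.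
exists N.+1; rewrite big_nat_recl //; apply: ler_wpDl (f_ge0 0) _.
apply: (@le_trans _ _ (sig2 * series (@harmonic R) N)).
  have -> : M = sig2 * (M / sig2) by field; rewrite gt_eqF.
  by rewrite ler_pM2l // ltW.
rewrite /series /= big_distrr; apply: ler_sum_nat => k _ /=.
exact: f_lb2.
Qed.
End Comb.

Section Meas.
Context d (T : measurableType d) (R : realType) (P : probability T R)
  (X : nat -> nat -> T -> R) (p : nat -> R).
Hypothesis mX : forall j k, (j = 1%N \/ j = 2%N) -> (1 <= k)%N ->
     measurable_fun setT (X j k).
Hypothesis hP : forall j k, (j = 1%N \/ j = 2%N) -> (1 <= k)%N ->
     P [set x | X j k x = 1] = (p j)%:E /\
     P [set x | X j k x = 0] = (1 - p j)%:E.

Lemma mset j k b : (j = 1%N \/ j = 2%N) -> (1 <= k)%N ->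
  measurable [set x | X j k x = b].
Proof.
move=> hj hk; have := mX j k hj hk measurableT _ (measurable_set1 b).
by rewrite setTI.
Qed.

Fixpoint Atom (w : seq (bool * bool)) : set T :=
  if w is s :: w' then Atom w' `&`
    [set x | X 1 (size w').+1 x = (s.1 : nat)%:R /\ X 2 (size w').+1 x = (s.2 : nat)%:R]
  else setT.

Lemma mAtom w : measurable (Atom w).
Proof.
elim: w => [|s w IH] //=; apply: measurableI => //.
by apply: measurableI; apply: mset; auto.
Qed.

Lemma split1 (E : set T) j k : (j = 1%N \/ j = 2%N) -> (1 <= k)%N -> measurable E ->
  P E = (P (E `&` [set x | X j k x = 1%R]) + P (E `&` [set x | X j k x = 0%R]))%E.
Proof.
move=> hj hk mE.
set A1 := [set x | X j k x = 1]; set A0 := [set x | X j k x = 0].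
have m1 : measurable A1 by apply: mset.
have m0 : measurable A0 by apply: mset.
have d10 : A1 `&` A0 = set0.
  apply/seteqP; split => x //; rewrite /A1 /A0 /= => -[-> /eqP].
  by rewrite oner_eq0.
have PU : P (A1 `|` A0) = 1%E.
  have -> : P (A1 `|` A0) = (P A1 + P A0)%E by rewrite measureU.
  case: (hP j k hj hk) => h1 h0; rewrite /A1 /A0 h1 h0.
  by rewrite -EFinD addrC subrK.
have mU : measurable (A1 `|` A0) by apply: measurableU.
have PC : P (~` (A1 `|` A0)) = 0%E by rewrite probability_setC // PU subee.
have mEU : measurable (E `&` (A1 `|` A0)) by apply: measurableI.
have mEC : measurable (E `&` ~` (A1 `|` A0)).
  by apply: measurableI => //; apply: measurableC.
have -> : P E = (P (E `&` (A1 `|` A0)) + P (E `&` ~` (A1 `|` A0)))%E.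
  rewrite -measureU //.
  all: try by rewrite -setIUr setUv setIT.
  by rewrite setIACA setICr setI0.
have -> : P (E `&` ~` (A1 `|` A0)) = 0%E.
  apply/eqP; rewrite -measure_le0 -PC; apply: le_measure; rewrite ?inE //.
  exact: measurableC.
rewrite adde0 setIUr -measureU //.
- by apply: measurableI.
- by apply: measurableI.
- by rewrite setIACA d10 setI0.
Qed.

Lemma Atom_cons E s w : E `&` Atom (s :: w) =
  E `&` Atom w `&` [set x | X 1 (size w).+1 x = (s.1 : nat)%:R]
    `&` [set x | X 2 (size w).+1 x = (s.2 : nat)%:R].
Proof. by rewrite /= -!setIA. Qed.

Lemma part n E : measurable E -> P E = (\sum_(w <- pats n) P (E `&` Atom w))%E.
Proof.
elim: n E => [|n IH] E mE; first by rewrite /= big_seq1 setIT.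
rewrite (IH E mE) pats_S big_allpairs_dep; apply: eq_big_seq => w hw.
rewrite !big_cons big_nil ?adde0 ?addr0 !Atom_cons.
have h1 : (1 <= (size w).+1)%N by [].
have mEw : measurable (E `&` Atom w) by apply: measurableI => //; apply: mAtom.
rewrite (split1 (E `&` Atom w) 1 (size w).+1) //; last by left.
rewrite (split1 (E `&` Atom w `&` [set x | X 1 (size w).+1 x = 1]) 2 (size w).+1) //;
  last 2 first.
- by right.
- by apply: measurableI => //; apply: mset => //; left.
rewrite (split1 (E `&` Atom w `&` [set x | X 1 (size w).+1 x = 0]) 2 (size w).+1) //;
  last 2 first.
- by right.
- by apply: measurableI => //; apply: mset => //; left.
rewrite /= ?adde0 ?addr0 !addeA. by [].
Qed.

Fixpoint idx (w : seq (bool * bool)) : seq (nat * nat) :=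
  if w is s :: w' then (1%N, (size w').+1) :: (2%N, (size w').+1) :: idx w' else [::].
Fixpoint vl (w : seq (bool * bool)) (i : nat * nat) : R :=
  if w is s :: w' then
    (if i.2 == (size w').+1 then (if i.1 == 1%N then (s.1 : nat)%:R else (s.2 : nat)%:R)
     else vl w' i)
  else 0.

Lemma idx_mem w i : i \in idx w -> (i.1 = 1%N \/ i.1 = 2%N) /\ (1 <= i.2 <= size w)%N.
Proof.
elim: w => [|s w IH] //=; rewrite !inE => /orP[/eqP ->|/orP[/eqP ->|/IH [h1 h2]]] /=.
- by split; [left|].
- by split; [right|].
- by split => //; case/andP: h2 => a b; apply/andP; split => //; apply: leqW.
Qed.

Lemma idx_uniq w : uniq (idx w).
Proof.
elim: w => [|s w IH] //=; rewrite IH andbT.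
rewrite inE negb_or; apply/andP; split; [apply/andP; split => //|];
  apply/negP => /idx_mem [_ /andP [_]] /=; rewrite ltnn //.
Qed.

Lemma vl_cons s w i : i \in idx w -> vl (s :: w) i = vl w i.
Proof.
move=> /idx_mem [_ /andP [_ h]] /=.
by rewrite (_ : (i.2 == (size w).+1) = false) //; apply/negbTE; rewrite neq_ltn ltnS h.
Qed.

Lemma bigcap_idx w x :
  (forall i, i \in idx w -> X i.1 i.2 x = vl w i) <-> Atom w x.
Proof.
elim: w => [|s w IH] //=.
split.
- move=> H; split.
    apply/IH => i hi; rewrite -(vl_cons s) // H // !inE hi !orbT //.
  split.
    by have := H (1%N, (size w).+1); rewrite !inE eqxx /= eqxx /=; apply.
  by have := H (2%N, (size w).+1); rewrite !inE eqxx orbT /= eqxx /=; apply.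
- move=> [/IH Hw [h1 h2]] i; rewrite !inE => /orP[/eqP ->|/orP[/eqP ->|hi]] /=.
  + by rewrite eqxx.
  + by rewrite eqxx.
  + by have := vl_cons s w i hi => /= ->; apply: Hw.
Qed.

Lemma PX j k (b : bool) : (j = 1%N \/ j = 2%N) -> (1 <= k)%N ->
  P (X j k @^-1` [set (b : nat)%:R]) = (if b then p j else 1 - p j)%:E.
Proof. by move=> hj hk; case: b; [exact: (hP j k hj hk).1 | exact: (hP j k hj hk).2]. Qed.

Lemma prod_idx w (v : nat * nat -> R) : (forall i, i \in idx w -> v i = vl w i) ->
  (\prod_(i <- idx w) P (X i.1 i.2 @^-1` [set v i]))%E = (W R (p 1%N) (p 2%N) w)%:E.
Proof.
elim: w v => [|s w IH] v hv; first by rewrite big_nil.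
rewrite !big_cons (IH v); last first.
  by move=> i hi; rewrite hv ?inE ?hi ?orbT // vl_cons.
have -> : v (1%N, (size w).+1) = (s.1 : nat)%:R by rewrite hv ?inE ?eqxx //= eqxx.
have -> : v (2%N, (size w).+1) = (s.2 : nat)%:R by rewrite hv ?inE ?eqxx ?orbT //= eqxx.
rewrite /= !PX //; [|by right|by left].
by rewrite -!EFinM /wt mulrA.
Qed.

Hypothesis hind : mutually_independent P
    [set jk : nat * nat | (jk.1 = 1%N \/ jk.1 = 2%N) /\ (1 <= jk.2)%N]
    (fun jk => X jk.1 jk.2).

Lemma Patom w : P (Atom w) = (W R (p 1%N) (p 2%N) w)%:E.
Proof.
have mi := hind (idx w) (fun i => [set vl w i]) (idx_uniq w).
have -> : Atom w = \bigcap_(i in [set i | i \in idx w])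
    ((fun jk => X jk.1 jk.2) i @^-1` [set vl w i]).
  apply/seteqP; split => x.
  - by move/bigcap_idx => H i hi; exact: H.
  - by move=> H; apply/bigcap_idx => i hi; exact: H.
rewrite mi.
- exact: prod_idx.
- by move=> i /idx_mem [h1 /andP [h2 _]].
- by move=> i; exact: measurable_set1.
Qed.

Lemma Ssum_S j n x : Ssum X j n.+1 x = Ssum X j n x + X j n.+1 x.
Proof. by rewrite /Ssum big_nat_recr. Qed.

Lemma Ssum0 j x : Ssum X j 0 x = 0.
Proof. by rewrite /Ssum big_geq. Qed.

Lemma Ssum_atom w x : Atom w x ->
  Ssum X 1 (size w) x - Ssum X 2 (size w) x = (Dz w)%:~R.
Proof.
elim: w => [|s w IH] /=; first by rewrite !Ssum0 subrr.
move=> [/IH H [h1 h2]]; rewrite !Ssum_S h1 h2 intrD -H.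
case: s {h1 h2} => [[] []] /=; rewrite ?mulr1n ?mulr0n; ring.
Qed.

Definition An n := [set x | forall k, (0 < k <= n)%N -> Ssum X 1 k x != Ssum X 2 k x].

Lemma An_S n x : An n.+1 x <-> An n x /\ Ssum X 1 n.+1 x != Ssum X 2 n.+1 x.
Proof.
split.
- move=> H; split; first by move=> k /andP [k0 kn]; apply: H; rewrite k0 /= (leq_trans kn).
  by apply: H; rewrite /= ltnSn.
- move=> [H1 H2] k /andP [k0]; rewrite leq_eqVlt => /orP [/eqP ->|kn] //.
  by apply: H1; rewrite k0.
Qed.

Lemma An0 x : An 0 x.
Proof. by move=> k /andP [k0 k1]; move: k0; rewrite leqn0 in k1; rewrite (eqP k1). Qed.

Lemma An_atom w x : Atom w x -> (An (size w) x <-> avoid w).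
Proof.
elim: w => [|s w IH] /=; first by move=> _; split => // _; exact: An0.
move=> [hw [h1 h2]]; have IHw := IH hw.
have hS : (Ssum X 1 (size w).+1 x != Ssum X 2 (size w).+1 x) = (st s + Dz w != 0).
  have := Ssum_atom (s :: w) x; rewrite /= => /(_ (conj hw (conj h1 h2))) HD.
  by rewrite -subr_eq0 HD intr_eq0.
rewrite An_S hS; split.
- by move=> [/IHw -> ->].
- by move/andP => [-> /IHw].
Qed.

Lemma mSsum j n : (j = 1%N \/ j = 2%N) -> measurable_fun setT (Ssum X j n).
Proof.
move=> hj; elim: n => [|n IH].
  by rewrite (_ : Ssum X j 0 = cst 0); [exact: measurable_cst | apply/funext => x; rewrite Ssum0].
rewrite (_ : Ssum X j n.+1 = Ssum X j n \+ X j n.+1); last by apply/funext => x; rewrite Ssum_S.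
by apply: measurable_funD => //; apply: mX.
Qed.

Lemma mAn n : measurable (An n).
Proof.
elim: n => [|n IH].
  by rewrite (_ : An 0 = setT) //; apply/seteqP; split => x // _; exact: An0.
rewrite (_ : An n.+1 = An n `&` ((Ssum X 1 n.+1 \- Ssum X 2 n.+1) @^-1` (~` [set 0]))).
  apply: measurableI => //; rewrite -(setTI (_ @^-1` _)).
  apply: measurable_funB; try apply: mSsum; auto.
  exact: measurableC (measurable_set1 0).
apply/seteqP; split => x.
- by move/An_S => [H1 H2]; split => //=; apply/eqP; rewrite subr_eq0.
- by move=> [H1 /= /eqP H2]; apply/An_S; split => //; rewrite -subr_eq0.
Qed.

Lemma PAn n : P (An n) = (f R (p 1%N) (p 2%N) n)%:E.
Proof.
rewrite (part n (An n) (mAn n)) /f /A -sumEFin; apply: eq_big_seq => w hw.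
have sw := @pats_size n w hw; rewrite -sw.
case hav: (avoid w).
- have -> : An (size w) `&` Atom w = Atom w.
    apply/seteqP; split => x; first by case.
    by move=> hx; split => //; apply/(An_atom w x hx).
  by rewrite Patom /= !mul1r.
- have -> : An (size w) `&` Atom w = set0.
    apply/seteqP; split => [x [hA hx]|x //].
    by move/(An_atom w x hx): hA; rewrite hav.
  by rewrite measure0 /= !mul0r.
Qed.

Lemma An_mono : nonincreasing_seq An.
Proof.
move=> n m nm; apply/asboolP => z hz k /andP [k0 kn]; apply: hz.
by rewrite k0 (leq_trans kn nm).
Qed.

Lemma J2_oo x : J2 X x = +oo%E <-> (forall n, An n x).
Proof.
split.
- move=> H n k /andP[k0 kn]; apply/negP => /eqP Heq.
  have : (J2 X x <= (k%:R)%:E)%E by apply: ereal_inf_lbound; exists k.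
  by rewrite H.
- move=> H; rewrite /J2 (_ : [set _ | _ in _] = set0) ?ereal_inf0 //.
  apply/seteqP; split => // y [n [n0 hn] _].
  by have := H n n; rewrite n0 leqnn hn eqxx => /(_ isT).
Qed.

Lemma J2_series x : J2 X x = (\sum_(n <oo) (\1_(An n) x)%:E)%E.
Proof.
have [Hall|Hn] := pselect (forall n, An n x).
  rewrite (proj2 (J2_oo x) Hall); apply/esym/cvg_lim => //.
  rewrite (_ : (fun N => _) = (fun N : nat => (N%:R)%:E)); last first.
    apply/funext => N.
    rewrite (eq_bigr (fun _ => 1%:E)); last by move=> k _; rewrite indicE mem_set.
    by rewrite sumEFin sumr_const_nat subn0.
  by apply/cvgenyP.
have [k hk] : exists k, (0 < k)%N && (Ssum X 1 k x == Ssum X 2 k x).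
  apply: contrapT => H'; apply: Hn => n k /andP [k0 kn]; apply/negP => /eqP e.
  by apply: H'; exists k; rewrite k0 e eqxx.
pose Q : pred nat := fun j => (0 < j)%N && (Ssum X 1 j x == Ssum X 2 j x).
have exQ : exists j, Q j by exists k.
pose m := ex_minn exQ.
have [hm mmin] : (0 < m)%N && (Ssum X 1 m x == Ssum X 2 m x) /\
    forall j, (0 < j)%N && (Ssum X 1 j x == Ssum X 2 j x) -> (m <= j)%N.
  by rewrite /m; case: ex_minnP.
have An_m n : An n x <-> (n < m)%N.
  split.
  - move=> H; rewrite ltnNge; apply/negP => mn.
    case/andP: hm => m0 /eqP e; have := H m; rewrite m0 mn e eqxx => /(_ isT).
    by [].
  - move=> nm j /andP [j0 jn]; apply/negP => /eqP e.
    have := mmin j; rewrite j0 e eqxx => /(_ isT) mj.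
    by move: (leq_ltn_trans (leq_trans mj jn) nm); rewrite ltnn.
have -> : J2 X x = (m%:R)%:E.
  apply/le_anti/andP; split.
    by apply: ereal_inf_lbound; exists m => //; case/andP: hm => m0 /eqP e; split.
  apply: le_ereal_inf_tmp => y [j [j0 ej] <-]; rewrite lee_fin ler_nat.
  by apply: mmin; rewrite j0 ej eqxx.
apply/esym; apply: lim_near_cst => //.
near=> N.
have mN : (m <= N)%N by near: N; exact: nbhs_infty_ge.
rewrite (big_cat_nat (n := m)) //=.
rewrite (eq_big_nat _ _ (F2 := fun _ => 1%:E)); last first.
  by move=> i /andP [_ im]; rewrite indicE mem_set //; apply/An_m.
rewrite [X in (_ + X)%E](eq_big_nat _ _ (F2 := fun _ => 0%:E)); last first.
  move=> i /andP [mi _]; rewrite indicE memNset //.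
  by move/An_m; rewrite ltnNge mi.
by rewrite !sumEFin !sumr_const_nat subn0 mul0rn addr0.
Unshelve. all: by end_near.
Qed.

Lemma int_J2 : (\int[P]_x J2 X x = \sum_(n <oo) (f R (p 1%N) (p 2%N) n)%:E)%E.
Proof.
rewrite (eq_integral (fun x => \sum_(n <oo) (\1_(An n) x)%:E)%E); last first.
  by move=> x _; exact: J2_series.
rewrite integral_nneseries //.
- apply: congr_lim; apply/funext => N; apply: eq_bigr => n _.
  by rewrite integral_indic ?setIT //; [exact: PAn | exact: mAn].
all: try by move=> n; apply/measurable_EFinP; apply: measurable_indic; exact: mAn.
all: try by move=> n x _; rewrite lee_fin indicE ler0n.
Qed.

Lemma PJ2 : 0 <= p 1%N <= 1 -> 0 <= p 2%N <= 1 ->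
  P [set x | J2 X x = +oo%E] = (`|p 1%N - p 2%N|)%:E.
Proof.
move=> h1 h2.
have -> : [set x | J2 X x = +oo%E] = \bigcap_n An n.
  apply/seteqP; split => x /=.
  - by move/J2_oo => H n _; exact: H.
  - by move=> H; apply/J2_oo => n; exact: H.
have hcv := @nonincreasing_cvg_mu _ _ _ P An ltac:(by apply: (@le_lt_trans _ _ 1%E); [apply: probability_le1; exact: mAn | exact: ltry])
  mAn (bigcapT_measurable mAn) An_mono.
have hf : (fun n => (f R (p 1%N) (p 2%N) n)%:E) @ \oo --> (`|p 1%N - p 2%N|)%:E.
  apply/fine_cvgP; split; first exact: nearW.
  exact: f_cvg.
have hcv' : (fun n => (f R (p 1%N) (p 2%N) n)%:E) @ \oo --> P (\bigcap_n An n).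
  by rewrite (_ : (fun n => _) = P \o An) //; apply/funext => n /=; exact/esym/PAn.
exact: cvg_unique hcv' hf.
Qed.

Lemma ge_all_oo (y : \bar R) : (forall M : R, (M%:E <= y)%E) -> y = +oo%E.
Proof.
case: y => [r| |] // H.
- have := H (r + 1)%R; rewrite lee_fin => h; exfalso; lra.
- by have := H 0%R.
Qed.

Lemma intJ2_oo : 0 < p 1%N < 1 -> 0 < p 2%N < 1 -> (\int[P]_x J2 X x = +oo)%E.
Proof.
move=> h1 h2.
have h1' : 0 <= p 1%N <= 1 by case/andP: h1 => a b; rewrite !ltW.
have h2' : 0 <= p 2%N <= 1 by case/andP: h2 => a b; rewrite !ltW.
have s0 : 0 < sig2 R (p 1%N) (p 2%N).
  rewrite /sig2 /m2; case/andP: h1 => a b; case/andP: h2 => c e; nra.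
rewrite int_J2; apply: ge_all_oo => M.
have [N hN] := @f_sum_big R _ _ h1' h2' M s0.
apply: le_trans (nneseries_lim_ge N _).
  by rewrite sumEFin lee_fin.
by move=> n _ _; rewrite lee_fin; exact: f_ge0.
Qed.
End Meas.

Theorem theorem3 (d : measure_display) (T : measurableType d) (R : realType)
  (P : probability T R) (X : nat -> nat -> T -> R) (p : nat -> R) :
  0 < p 1%N < 1 -> 0 < p 2%N < 1 ->
  (forall j k, (j = 1%N \/ j = 2%N) -> (1 <= k)%N ->
     measurable_fun setT (X j k)) ->
  (forall j k, (j = 1%N \/ j = 2%N) -> (1 <= k)%N ->
     P [set x | X j k x = 1] = (p j)%:E /\
     P [set x | X j k x = 0] = (1 - p j)%:E) ->
  mutually_independent P
    [set jk : nat * nat | (jk.1 = 1%N \/ jk.1 = 2%N) /\ (1 <= jk.2)%N]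
    (fun jk => X jk.1 jk.2) ->
  P [set x | J2 X x = +oo%E] = `|p 1%N - p 2%N|%:E /\
  (\int[P]_x J2 X x = +oo)%E.
Proof.
move=> h1 h2 mX hP hind.
have h1' : 0 <= p 1%N <= 1 by case/andP: h1 => a b; rewrite !ltW.
have h2' : 0 <= p 2%N <= 1 by case/andP: h2 => a b; rewrite !ltW.
split.
- exact: (@PJ2 d T R P X p mX hP hind h1' h2').
- exact: (@intJ2_oo d T R P X p mX hP hind h1 h2).
Qed.
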